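(* Let $n\in\mathbb{N}$, $\delta\in(0,1]$ and $\varepsilon_0>0$ with $\varepsilon_0\le\log\left(\frac{n}{16\log(2/\delta)}\right)$. Let $C\sim\mathrm{Bin}(n-1,e^{-\varepsilon_0})$, conditionally on $C$ let $A\sim\mathrm{Bin}(C,1/2)$, and let $\Delta\sim\mathrm{Bern}\left(\frac{e^{\varepsilon_0}}{e^{\varepsilon_0}+1}\right)$ be independent of $(C,A)$. Let $P=(A+\Delta,\,C-A+1-\Delta)$ and $Q=(A+1-\Delta,\,C-A+\Delta)$. Then $P$ and $Q$ are $(\varepsilon,\delta)$-indistinguishable for $$\varepsilon=\log\left(1+\frac{e^{\varepsilon_0}-1}{e^{\varepsilon_0}+1}\left(\frac{8\sqrt{e^{\varepsilon_0}\log(4/\delta)}}{\sqrt{n}}+\frac{8e^{\varepsilon_0}}{n}\right)\right).$$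
   Context: Two random variables $P,Q$ on the same space are $(\varepsilon,\delta)$-indistinguishable if for every event $E$, $e^{-\varepsilon}(\Pr(Q\in E)-\delta)\le\Pr(P\in E)\le e^{\varepsilon}\Pr(Q\in E)+\delta$. $\mathrm{Bin}(m,p)$ is the binomial distribution and $\mathrm{Bern}(p)$ the Bernoulli distribution with bias $p$. *)

(* Defs.v *)
From HB Require Import structures.
From mathcomp Require Import all_boot all_order all_algebra.
From mathcomp Require Import all_classical all_reals all_analysis.
Set Implicit Arguments. Unset Strict Implicit. Unset Printing Implicit Defensive.
Import Order.TTheory GRing.Theory Num.Theory.
Local Open Scope ring_scope.

Definition indist (R : realType) (T : Type) (eps del : R)
  (PrP PrQ : pred T -> R) : Prop :=
  forall E : pred T,
    expR (- eps) * (PrQ E - del) <= PrP E /\ PrP E <= expR eps * PrQ E + del.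

Definition binom_pmf (R : realType) (m : nat) (p : R) (k : nat) : R :=
  ('C(m, k))%:R * p ^+ k * (1 - p) ^+ (m - k).

Definition bern_pmf (R : realType) (p : R) (d : nat) : R :=
  if d == 0%N then 1 - p else p.

(* Joint law: C ~ Bin(n-1, e^{-eps0}), A | C ~ Bin(C, 1/2),
   Delta ~ Bern(e^eps0/(e^eps0+1)) independent of (C, A).
   Probability that f (A, C, Delta) lies in E. *)
Definition law_ACD (R : realType) (n : nat) (eps0 : R)
  (f : nat -> nat -> nat -> nat * nat) (E : pred (nat * nat)) : R :=
  \sum_(c < n) \sum_(a < c.+1) \sum_(d < 2)
     binom_pmf n.-1 (expR (- eps0)) c * binom_pmf c (2^-1) a
     * bern_pmf (expR eps0 / (expR eps0 + 1)) d
     * (f a c d \in E)%:R.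

(* P = (A + Delta, C - A + 1 - Delta), Q = (A + 1 - Delta, C - A + Delta);
   note a <= c and d <= 1 on the support, so nat subtraction is exact. *)
Definition PrP (R : realType) (n : nat) (eps0 : R) (E : pred (nat * nat)) : R :=
  law_ACD n eps0 (fun a c d => (a + d, c - a + 1 - d))%N E.
Definition PrQ (R : realType) (n : nat) (eps0 : R) (E : pred (nat * nat)) : R :=
  law_ACD n eps0 (fun a c d => (a + 1 - d, c - a + d))%N E.

(* Main.v *)
Require Import Defs.
From HB Require Import structures.
From mathcomp Require Import all_boot all_order all_algebra.
From mathcomp Require Import all_classical all_reals all_analysis.
From mathcomp Require Import lra ring zify.
Import Order.TTheory GRing.Theory Num.Theory.
Local Open Scope ring_scope.

Definition Bc (R : realType) (c a : nat) : R := binom_pmf c (2^-1) a.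
Definition Bm1 (R : realType) (c x : nat) : R := if x is y.+1 then Bc R c y else 0.
Definition inner (R : realType) (u v : R) (c : nat) (h : nat -> R) : R :=
  \sum_(a < c.+1) Bc R c a * (u * h a + v * h a.+1).

Arguments inner {R}.

Lemma BcE (R : realType) c a : Bc R c a = 'C(c, a)%:R * 2^-1 ^+ c.
Proof.
rewrite /Bc /binom_pmf.
have -> : 1 - 2^-1 = 2^-1 :> R by field.
case: (leqP a c) => h.
  by rewrite -mulrA -exprD subnKC.
by rewrite bin_small // !mul0r.
Qed.

Lemma Bc_ge0 (R : realType) c a : 0 <= Bc R c a.
Proof. by rewrite BcE mulr_ge0 // exprn_ge0 // invr_ge0. Qed.

Lemma Bm1_ge0 (R : realType) c x : 0 <= Bm1 R c x.
Proof. by case: x => [|x] //=; apply: Bc_ge0. Qed.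

Lemma Bc_big (R : realType) c : Bc R c c.+1 = 0.
Proof. by rewrite BcE bin_small // mul0r. Qed.

Lemma Bm1_id (R : realType) c x :
  Bm1 R c x * ((c.+1)%:R - x%:R) = x%:R * Bc R c x.
Proof.
case: x => [|y] /=; first by rewrite mul0r mul0r.
rewrite !BcE.
case: (leqP y c) => h.
  have -> : (c.+1)%:R - (y.+1)%:R = (c - y)%:R :> R.
    by rewrite -natrB ?ltnS // subSS.
  rewrite mulrAC -natrM mulnC -mul_bin_left natrM mulrA.
  done.
rewrite bin_small // bin_small ?mul0r ?mulr0 //.
by apply: ltnW; rewrite ltnS.
Qed.

Lemma inner_reindex (R : realType) (u v : R) c h :
  inner u v c h = \sum_(x < c.+2) (v * Bm1 R c x + u * Bc R c x) * h x.
Proof.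
rewrite /inner.
under [RHS]eq_bigr do rewrite mulrDl.
rewrite big_split /=.
have E1 : \sum_(x < c.+2) v * Bm1 R c x * h x = \sum_(a < c.+1) v * Bc R c a * h a.+1.
  by rewrite big_ord_recl /= mulr0 mul0r add0r.
have E2 : \sum_(x < c.+2) u * Bc R c x * h x = \sum_(a < c.+1) u * Bc R c a * h a.
  by rewrite big_ord_recr /= Bc_big mulr0 mul0r addr0.
rewrite E1 E2 -big_split /=.
apply: eq_bigr => i _; ring.
Qed.

Lemma inner_rev (R : realType) (u v : R) c h :
  inner u v c h = inner v u c (fun x => h (c.+1 - x)%N).
Proof.
rewrite /inner (reindex_inj rev_ord_inj) /=.
apply: eq_bigr => i _.
have hi : (i <= c)%N by rewrite -ltnS.
rewrite (_ : (c.+1 - i.+1 = c - i)%N); last by rewrite subSS.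
rewrite (_ : ((c - i).+1 = c.+1 - i)%N); last by rewrite subSn.
rewrite !BcE bin_sub //.
ring.
Qed.
Lemma PrP_inner (R : realType) n (eps0 : R) E :
  PrP n eps0 E = \sum_(c < n) binom_pmf n.-1 (expR (- eps0)) c *
    inner (1 - expR eps0 / (expR eps0 + 1)) (expR eps0 / (expR eps0 + 1)) c
      (fun x => ((x, (c.+1 - x)%N) \in E)%:R).
Proof.
rewrite /PrP /law_ACD; apply: eq_bigr => c _; rewrite /inner mulr_sumr.
apply: eq_bigr => a _; rewrite !big_ord_recl big_ord0 /= /bern_pmf /= /bump /=.
have ha : (a <= c)%N by rewrite -ltnS.
rewrite (_ : (a + 0 = a)%N); last by lia.
rewrite (_ : (c - a + 1 - 0 = c.+1 - a)%N); last by lia.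
rewrite (_ : (a + 1 = a.+1)%N); last by lia.
rewrite (_ : (c - a + 1 - 1 = c.+1 - a.+1)%N); last by lia.
rewrite /Bc; ring.
Qed.

Lemma PrQ_inner (R : realType) n (eps0 : R) E :
  PrQ n eps0 E = \sum_(c < n) binom_pmf n.-1 (expR (- eps0)) c *
    inner (expR eps0 / (expR eps0 + 1)) (1 - expR eps0 / (expR eps0 + 1)) c
      (fun x => ((x, (c.+1 - x)%N) \in E)%:R).
Proof.
rewrite /PrQ /law_ACD; apply: eq_bigr => c _; rewrite /inner mulr_sumr.
apply: eq_bigr => a _; rewrite !big_ord_recl big_ord0 /= /bern_pmf /= /bump /=.
have ha : (a <= c)%N by rewrite -ltnS.
rewrite (_ : (a + 1 - 0 = a.+1)%N); last by lia.
rewrite (_ : (c - a + 0 = c.+1 - a.+1)%N); last by lia.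
rewrite (_ : (a + 1 - 1 = a)%N); last by lia.
rewrite (_ : (c - a + 1 = c.+1 - a)%N); last by lia.
rewrite /Bc; ring.
Qed.
Lemma good_alg (R : realType) (e K m X b0 b1 : R) : 1 < e -> 0 <= K -> 0 <= X -> 0 < m ->
  0 <= b0 -> 0 <= b1 -> b0 * (m - X) = X * b1 -> X <= (K + 1) / (K + 2) * m ->
  e / (e + 1) * b0 + (1 - e / (e + 1)) * b1 <=
  (1 + (e - 1) / (e + 1) * K) * ((1 - e / (e + 1)) * b0 + e / (e + 1) * b1).
Proof.
move=> he hK hX hm hb0 hb1 hid hXm.
set E := 1 + (e - 1) / (e + 1) * K.
have he1 : 0 < e + 1 by lra.
have hK2 : 0 < K + 2 by lra.
have hgam : (K + 1) / (K + 2) < 1 by rewrite ltr_pdivrMr //; lra.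
have hmX : 0 < m - X.
  have : (K + 1) / (K + 2) * m < m.
    by rewrite -[X in _ < X]mul1r ltr_pM2r.
  lra.
have hE : E * e - 1 - (K + 1) / (K + 2) * ((e - 1) * (E + 1)) =
    (e - 1) * K ^+ 2 / ((e + 1) * (K + 2)).
  rewrite /E; field; apply/andP; split; lra.
have hE0 : 0 <= (e - 1) * K ^+ 2 / ((e + 1) * (K + 2)).
  apply: divr_ge0; last by apply: mulr_ge0; lra.
  by apply: mulr_ge0; [lra | apply: sqr_ge0].
have hEge : 1 <= E.
  rewrite /E -[X in X <= _]addr0 lerD2l; apply: mulr_ge0 => //.
  by apply: divr_ge0; lra.
have hprod : 0 <= (e - 1) * (E + 1) by apply: mulr_ge0; lra.
have key1 : X * ((e - 1) * (E + 1)) <= (E * e - 1) * m.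
  have h1 : X * ((e - 1) * (E + 1)) <= (K + 1) / (K + 2) * m * ((e - 1) * (E + 1)).
    by apply: ler_wpM2r.
  have h2 : (K + 1) / (K + 2) * m * ((e - 1) * (E + 1)) <= (E * e - 1) * m.
    rewrite mulrAC; apply: ler_wpM2r; lra.
  lra.
have key2 : b1 * (X * ((e - 1) * (E + 1)) - (E * e - 1) * m) <= 0.
  by apply: mulr_ge0_le0 => //; lra.
have key3 : (m - X) * ((e - E) * b0 - (E * e - 1) * b1) =
    b1 * (X * ((e - 1) * (E + 1)) - (E * e - 1) * m).
  have -> : (m - X) * ((e - E) * b0 - (E * e - 1) * b1) =
      (e - E) * (b0 * (m - X)) - (E * e - 1) * b1 * (m - X) by ring.
  rewrite hid; ring.
have key4 : (e - E) * b0 - (E * e - 1) * b1 <= 0.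
  move: key2; rewrite -key3 => k.
  by rewrite -(pmulr_rle0 _ hmX).
have -> : e / (e + 1) * b0 + (1 - e / (e + 1)) * b1 = (e * b0 + b1) / (e + 1).
  by field; lra.
have -> : E * ((1 - e / (e + 1)) * b0 + e / (e + 1) * b1) = (E * b0 + E * e * b1) / (e + 1).
  by field; lra.
apply: ler_wpM2r; first by rewrite invr_ge0; lra.
lra.
Qed.
Lemma per_c (R : realType) (e K lam : R) c (h : nat -> R) :
  1 < e -> 0 <= K -> 0 <= lam -> (forall x, 0 <= h x <= 1) ->
  inner (1 - e / (e + 1)) (e / (e + 1)) c h <=
  (1 + (e - 1) / (e + 1) * K) * inner (e / (e + 1)) (1 - e / (e + 1)) c h +
  inner (1 - e / (e + 1)) (e / (e + 1)) c
     (fun x => expR (lam * (x%:R - (K + 1) / (K + 2) * (c.+1)%:R))).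
Proof.
move=> he hK hlam hh.
rewrite !inner_reindex mulr_sumr -big_split /=.
apply: ler_sum => x _.
set p := e / (e + 1).
set E := 1 + (e - 1) / (e + 1) * K.
have hp0 : 0 <= p by rewrite /p divr_ge0 //; lra.
have hp1 : p <= 1 by rewrite /p ler_pdivrMr; lra.
have hb0 := Bm1_ge0 R c x.
have hb1 := Bc_ge0 R c x.
have hpi : 0 <= p * Bm1 R c x + (1 - p) * Bc R c x.
  by apply: addr_ge0; apply: mulr_ge0 => //; lra.
have hka : 0 <= (1 - p) * Bm1 R c x + p * Bc R c x.
  by apply: addr_ge0; apply: mulr_ge0 => //; lra.
have hEge : 0 <= E.
  rewrite /E; apply: addr_ge0 => //; apply: mulr_ge0 => //.
  by apply: divr_ge0; lra.
have [hx0 hx1] := andP (hh x).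
have hex0 : 0 <= expR (lam * (x%:R - (K + 1) / (K + 2) * (c.+1)%:R)) by apply: expR_ge0.
case: (lerP (x%:R) ((K + 1) / (K + 2) * (c.+1)%:R)) => hx.
  have hg : p * Bm1 R c x + (1 - p) * Bc R c x <= E * ((1 - p) * Bm1 R c x + p * Bc R c x).
    apply: (@good_alg R e K (c.+1)%:R x%:R) => //.
    exact: Bm1_id.
  have h1 : (p * Bm1 R c x + (1 - p) * Bc R c x) * h x <=
      E * ((1 - p) * Bm1 R c x + p * Bc R c x) * h x by apply: ler_wpM2r.
  have h2 : 0 <= (p * Bm1 R c x + (1 - p) * Bc R c x) *
      expR (lam * (x%:R - (K + 1) / (K + 2) * (c.+1)%:R)) by apply: mulr_ge0.
  rewrite mulrA; lra.
have hex1 : 1 <= expR (lam * (x%:R - (K + 1) / (K + 2) * (c.+1)%:R)).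
  apply: le_trans (expR_ge1Dx _); rewrite lerDl; apply: mulr_ge0 => //; lra.
have h1 : (p * Bm1 R c x + (1 - p) * Bc R c x) * h x <=
    (p * Bm1 R c x + (1 - p) * Bc R c x) *
      expR (lam * (x%:R - (K + 1) / (K + 2) * (c.+1)%:R)).
  by apply: ler_wpM2l => //; lra.
have h2 : 0 <= E * ((1 - p) * Bm1 R c x + p * Bc R c x) * h x.
  by apply: mulr_ge0 => //; apply: mulr_ge0.
rewrite mulrA; lra.
Qed.
Lemma tail_c (R : realType) (p lam gam : R) c :
  0 <= p <= 1 -> 0 <= lam ->
  inner (1 - p) p c (fun x => expR (lam * (x%:R - gam * (c.+1)%:R))) <=
  expR (lam * (1 - gam)) * ((expR (- (lam * gam)) + expR (lam * (1 - gam))) / 2) ^+ c.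
Proof.
move=> /andP[hp0 hp1] hlam.
have step : inner (1 - p) p c (fun x => expR (lam * (x%:R - gam * (c.+1)%:R))) <=
    \sum_(a < c.+1) Bc R c a * expR (lam * (a.+1%:R - gam * (c.+1)%:R)).
  rewrite /inner; apply: ler_sum => a _.
  apply: ler_wpM2l; first exact: Bc_ge0.
  have hm : expR (lam * (a%:R - gam * (c.+1)%:R)) <= expR (lam * (a.+1%:R - gam * (c.+1)%:R)).
    rewrite ler_expR; apply: ler_wpM2l => //.
    by rewrite lerD2r ler_nat.
  have := expR_ge0 (lam * (a%:R - gam * (c.+1)%:R)).
  nra.
apply: (le_trans step).
have ex : forall a : nat, expR (lam * (a.+1%:R - gam * (c.+1)%:R)) =
    expR (lam * (1 - gam)) * expR (- (lam * gam)) ^+ c * expR lam ^+ a.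
  move=> a; rewrite -!expRM_natl -!expRD; congr expR.
  rewrite -[a.+1]addn1 -[c.+1]addn1 !natrD; ring.
under eq_bigr do rewrite ex BcE.
have -> : expR (- (lam * gam)) + expR (lam * (1 - gam)) = expR (- (lam * gam)) * (expR lam + 1).
  have -> : expR (lam * (1 - gam)) = expR (- (lam * gam)) * expR lam.
    by rewrite -expRD; congr expR; ring.
  ring.
rewrite !exprMn exprD1n.
rewrite le_eqVlt; apply/orP; left; apply/eqP.
transitivity (expR (lam * (1 - gam)) * (expR (- (lam * gam)) ^+ c * 2^-1 ^+ c) *
   \sum_(i < c.+1) expR lam ^+ i *+ 'C(c, i)); last by ring.
rewrite big_distrr /=.
apply: eq_bigr => a _.
rewrite -mulr_natr; ring.
Qed.
Lemma sum_c (R : realType) (q t : R) m :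
  \sum_(c < m.+1) binom_pmf m q c * t ^+ c = ((1 - q) + q * t) ^+ m.
Proof.
rewrite exprDn; apply: eq_bigr => c _.
rewrite /binom_pmf -mulr_natl exprMn; ring.
Qed.

Lemma sum_bound (R : realType) (q t : R) m :
  0 <= q <= 1 -> 0 <= t ->
  ((1 - q) + q * t) ^+ m <= expR (m%:R * (q * (t - 1))).
Proof.
move=> /andP[hq0 hq1] ht.
rewrite expRM_natl; apply: lerXn2r.
- rewrite nnegrE; have : 0 <= q * t by apply: mulr_ge0. lra.
- by rewrite nnegrE expR_ge0.
- have := expR_ge1Dx (q * (t - 1)); lra.
Qed.
Lemma expRN_le (R : realType) (y : R) : 0 < 1 + y -> expR (- y) <= (1 + y)^-1.
Proof.
move=> hy; rewrite expRN; rewrite lef_pV2 ?posrE ?expR_gt0 //.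
exact: expR_ge1Dx.
Qed.

Arguments expRN_le {R}.

Lemma t_bound (R : realType) (a : R) : 0 <= a -> a <= 2^-1 ->
  (expR (- (a + 2 * a ^+ 2)) + expR (a - 2 * a ^+ 2)) / 2 <= 1 - a ^+ 2.
Proof.
move=> ha0 ha1.
have hA : 0 < 1 + (a + 2 * a ^+ 2) by nra.
have hB : 0 < 1 + - (a - 2 * a ^+ 2) by nra.
have h1 := expRN_le _ hA.
have h2 := expRN_le _ hB.
rewrite opprK in h2.
set A := 1 + (a + 2 * a ^+ 2) in hA h1 *.
set B := 1 + - (a - 2 * a ^+ 2) in hB h2 *.
have h3 : (A^-1 + B^-1) / 2 <= 1 - a ^+ 2.
  have -> : (A^-1 + B^-1) / 2 = (A + B) / (2 * (A * B)) by field; lra.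
  rewrite ler_pdivrMr; last by apply: mulr_gt0 => //; apply: mulr_gt0.
  have e : (1 - a ^+ 2) * (2 * (A * B)) - (A + B) = 2 * a ^+ 4 * (1 - 4 * a ^+ 2).
    by rewrite /A /B; ring.
  have : 0 <= 2 * a ^+ 4 * (1 - 4 * a ^+ 2).
    apply: mulr_ge0; first by apply: mulr_ge0 => //; apply: exprn_ge0.
    nra.
  lra.
lra.
Qed.
Lemma numeric (R : realType) (X Y L a N : R) :
  0 <= X -> 0 < Y -> 4^-1 <= a -> X ^+ 2 = Y * L -> 16 * Y * (L - a) <= 1 ->
  Y^-1 - 1 <= N ->
  (8 * X + 8 * Y) / (2 * ((8 * X + 8 * Y) + 2)) -
    2 * ((8 * X + 8 * Y) / (2 * ((8 * X + 8 * Y) + 2))) ^+ 2 -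
    N * ((8 * X + 8 * Y) / (2 * ((8 * X + 8 * Y) + 2))) ^+ 2 <= 2 * a - L.
Proof.
move=> hX hY ha hXY hc hN.
set al := (8 * X + 8 * Y) / (2 * ((8 * X + 8 * Y) + 2)).
set w := X + Y.
have hw : 0 < w by rewrite /w; lra.
have hal : al = 2 * w / (4 * w + 1).
  rewrite /al /w; field; apply/andP; split; lra.
have hal0 : 0 <= al by rewrite hal; apply: divr_ge0; lra.
have hkey : Y * (L - 2 * a + 4^-1) <= al ^+ 2.
  case: (lerP 1 (4 * w)) => h4.
  - have h1 : 4^-1 <= al.
      rewrite hal ler_pdivlMr; last by lra.
      lra.
    have h2 : 16^-1 <= al ^+ 2.
      have -> : (16^-1 : R) = 4^-1 ^+ 2 by rewrite expr2; field.
      apply: lerXn2r => //; rewrite nnegrE //; lra.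
    have : Y * (L - 2 * a + 4^-1) <= Y * (L - a) by apply: ler_wpM2l; lra.
    lra.
  - have h1 : w <= al.
      rewrite hal ler_pdivlMr; last by lra.
      nra.
    have h2 : X ^+ 2 <= al ^+ 2.
      apply: lerXn2r; rewrite ?nnegrE //; rewrite /w in h1; lra.
    have : Y * (L - 2 * a + 4^-1) <= Y * L by apply: ler_wpM2l; lra.
    lra.
have hdiv : L - 2 * a + 4^-1 <= al ^+ 2 / Y.
  by rewrite ler_pdivlMr // mulrC.
have hsq : 0 <= al ^+ 2 by apply: sqr_ge0.
have hN2 : (Y^-1 - 1) * al ^+ 2 <= N * al ^+ 2 by apply: ler_wpM2r.
have h14 : al - al ^+ 2 <= 4^-1.
  have : 0 <= (al - 2^-1) ^+ 2 by apply: sqr_ge0.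
  have -> : (4^-1 : R) = 2^-1 * 2^-1 by field.
  rewrite expr2; nra.
have : al ^+ 2 / Y = (Y^-1 - 1) * al ^+ 2 + al ^+ 2 by field; lra.
lra.
Qed.
Lemma binom_ge0 (R : realType) m (q : R) c : 0 <= q <= 1 -> 0 <= binom_pmf m q c.
Proof.
move=> /andP[h0 h1]; rewrite /binom_pmf.
by apply: mulr_ge0; [apply: mulr_ge0 => //; apply: exprn_ge0 | apply: exprn_ge0; lra].
Qed.

Lemma ind01 (R : realType) (b : bool) : 0 <= (b%:R : R) <= 1.
Proof. by case: b; rewrite /= ?lexx ?ler01. Qed.
Theorem lemma3p5 (R : realType) (n : nat) (del eps0 : R)
  (hdel : 0 < del) (hdel1 : del <= 1) (heps0 : 0 < eps0)
  (heps0n : eps0 <= ln (n%:R / (16 * ln (2 / del)))) :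
  indist
    (ln (1 + (expR eps0 - 1) / (expR eps0 + 1) *
          (8 * Num.sqrt (expR eps0 * ln (4 / del)) / Num.sqrt n%:R
           + 8 * expR eps0 / n%:R)))
    del (PrP n eps0) (PrQ n eps0).
Proof.
have he : 1 < expR eps0 by rewrite expR_gt1.
have hl : 0 < ln (2 / del).
  apply: ln_gt0; rewrite ltr_pdivlMr //; lra.
have hn : (0 < n)%N.
  case: n heps0n => // h.
  rewrite mul0r ln0 // in h; lra.
have hz : 0 < n%:R / (16 * ln (2 / del)).
  by apply: divr_gt0; [rewrite ltr0n | apply: mulr_gt0 => //; lra].
have heub : expR eps0 <= n%:R / (16 * ln (2 / del)).
  by rewrite -[X in _ <= X](lnK hz) ler_expR.
set a := ln (2 : R).
have ha : 4^-1 <= a.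
  have h1 : expR (4^-1 : R) <= 2.
    have := expRN_le (- 4^-1 : R) ltac:(lra).
    rewrite opprK => h; apply: (le_trans h).
    have -> : (1 + - 4^-1 : R)^-1 = 4 / 3 by field.
    rewrite ler_pdivrMr; lra.
  have : ln (expR (4^-1 : R)) <= ln 2.
    by rewrite ler_ln ?posrE ?expR_gt0.
  by rewrite expRK.
have hL4 : ln (4 / del) = 2 * a - ln del.
  have -> : (4 / del : R) = 2 * (2 * del^-1) by ring.
  rewrite lnM ?posrE ?mulr_gt0 ?invr_gt0 // lnM ?posrE ?invr_gt0 // lnV ?posrE //.
  rewrite /a; ring.
have hl2 : ln (2 / del) = a - ln del.
  by rewrite lnM ?posrE ?invr_gt0 // lnV ?posrE.
have hL0 : 0 <= ln (4 / del).
  apply: ln_ge0; rewrite ler_pdivlMr //; lra.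
set L := ln (4 / del) in hL4 hL0 *.
case: n hn hz heub heps0n => [//|m] _ hz heub _.
set X := Num.sqrt (expR eps0 * L) / Num.sqrt m.+1%:R.
set Y := expR eps0 / m.+1%:R.
have hK : 8 * Num.sqrt (expR eps0 * L) / Num.sqrt m.+1%:R + 8 * expR eps0 / m.+1%:R =
    8 * X + 8 * Y by rewrite /X /Y !mulrA.
rewrite hK.
have hm0 : (0 : R) < m.+1%:R by rewrite ltr0n.
have hX0 : 0 <= X by rewrite /X divr_ge0 ?sqrtr_ge0.
have hY0 : 0 < Y by rewrite /Y divr_gt0 ?expR_gt0.
have hXY : X ^+ 2 = Y * L.
  rewrite /X /Y expr_div_n !sqr_sqrtr ?ler0n //; first by field; lra.
  by apply: mulr_ge0 => //; apply: expR_ge0.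
have hc : 16 * Y * (L - a) <= 1.
  have hl' : L - a = ln (2 / del) by rewrite hl2 hL4; ring.
  rewrite hl'.
  have : expR eps0 * (16 * ln (2 / del)) <= m.+1%:R.
    by rewrite -ler_pdivlMr //; apply: mulr_gt0 => //; lra.
  rewrite /Y => h.
  have -> : 16 * (expR eps0 / m.+1%:R) * ln (2 / del) = expR eps0 * (16 * ln (2 / del)) / m.+1%:R.
    by field; lra.
  by rewrite ler_pdivrMr // mul1r.
set K := 8 * X + 8 * Y.
have hK0 : 0 <= K by rewrite /K; lra.
set q := expR (- eps0).
have hq : 0 <= q <= 1.
  apply/andP; split; first exact: expR_ge0.
  by rewrite /q expR_le1; lra.
have hqe : q = (expR eps0)^-1 by rewrite /q expRN.
set Eps := 1 + (expR eps0 - 1) / (expR eps0 + 1) * K.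
have hEps : 0 < Eps.
  rewrite /Eps; have : 0 <= (expR eps0 - 1) / (expR eps0 + 1) * K.
    by apply: mulr_ge0 => //; apply: divr_ge0; lra.
  lra.
have hexp : expR (ln Eps) = Eps by rewrite lnK.
set al := K / (2 * (K + 2)).
set lam := K / (K + 2).
set gam := (K + 1) / (K + 2).
have hlam0 : 0 <= lam by rewrite /lam divr_ge0 //; lra.
have hal0 : 0 <= al by rewrite /al divr_ge0 //; lra.
have hal1 : al <= 2^-1.
  rewrite /al ler_pdivrMr; last lra.
  have -> : (2^-1 : R) * (2 * (K + 2)) = K + 2 by field.
  lra.
have Htail : \sum_(c < m.+1) binom_pmf m q c *
    inner (1 - expR eps0 / (expR eps0 + 1)) (expR eps0 / (expR eps0 + 1)) c
      (fun x => expR (lam * (x%:R - gam * (c.+1)%:R))) <= del.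
  set t := (expR (- (lam * gam)) + expR (lam * (1 - gam))) / 2.
  apply: (@le_trans _ _ (\sum_(c < m.+1) binom_pmf m q c * (expR (lam * (1 - gam)) * t ^+ c))).
    apply: ler_sum => c _; apply: ler_wpM2l; first exact: binom_ge0.
    apply: tail_c => //.
    apply/andP; split; first by apply: divr_ge0; [apply: expR_ge0 | have := expR_ge0 eps0; lra].
    by rewrite ler_pdivrMr; lra.
  under eq_bigr do rewrite mulrCA.
  rewrite -mulr_sumr sum_c.
  have ht0 : 0 <= t by rewrite /t divr_ge0 // addr_ge0 // expR_ge0.
  have ht : t <= 1 - al ^+ 2.
    have -> : t = (expR (- (al + 2 * al ^+ 2)) + expR (al - 2 * al ^+ 2)) / 2.
      rewrite /t; congr ((expR (- _) + expR _) / 2); rewrite /lam /gam /al; field; lra.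
    exact: t_bound.
  have h1 := @sum_bound R q t m hq ht0.
  have h2 : expR (m%:R * (q * (t - 1))) <= expR (m%:R * (q * - al ^+ 2)).
    rewrite ler_expR; apply: ler_wpM2l; first by rewrite ler0n.
    apply: ler_wpM2l; [by case/andP: hq | lra].
  have h3 : (expR (lam * (1 - gam))) * ((1 - q) + q * t) ^+ m <=
      expR (lam * (1 - gam)) * expR (m%:R * (q * - al ^+ 2)).
    apply: ler_wpM2l; first exact: expR_ge0.
    exact: (le_trans h1 h2).
  apply: (le_trans h3).
  rewrite -expRD -[X in _ <= X](lnK hdel) ler_expR.
  have hN : Y^-1 - 1 <= m%:R * q.
    rewrite /Y hqe invf_div.
    have -> : m.+1%:R / expR eps0 = m%:R * (expR eps0)^-1 + (expR eps0)^-1.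
      by rewrite -addn1 natrD; field; have := expR_gt0 eps0; lra.
    have : (expR eps0)^-1 <= 1 by rewrite invf_le1 ?expR_gt0 //; lra.
    lra.
  have hnum := @numeric R X Y L a (m%:R * q) hX0 hY0 ha hXY hc hN.
  rewrite -/K -/al in hnum.
  have -> : lam * (1 - gam) = al - 2 * al ^+ 2.
    rewrite /lam /gam /al; field; lra.
  have : ln del = 2 * a - L by rewrite hL4; ring.
  lra.
have M : forall G : nat -> nat -> R, (forall c x, 0 <= G c x <= 1) ->
    \sum_(c < m.+1) binom_pmf m q c *
      inner (1 - expR eps0 / (expR eps0 + 1)) (expR eps0 / (expR eps0 + 1)) c (G c) <=
    Eps * \sum_(c < m.+1) binom_pmf m q c *
      inner (expR eps0 / (expR eps0 + 1)) (1 - expR eps0 / (expR eps0 + 1)) c (G c) + del.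
  move=> G hG.
  apply: (@le_trans _ _ (\sum_(c < m.+1) binom_pmf m q c *
    (Eps * inner (expR eps0 / (expR eps0 + 1)) (1 - expR eps0 / (expR eps0 + 1)) c (G c) +
     inner (1 - expR eps0 / (expR eps0 + 1)) (expR eps0 / (expR eps0 + 1)) c
      (fun x => expR (lam * (x%:R - gam * (c.+1)%:R)))))).
    apply: ler_sum => c _; apply: ler_wpM2l; first exact: binom_ge0.
    exact: per_c.
  under eq_bigr do rewrite mulrDr mulrCA.
  rewrite big_split /= -mulr_sumr.
  by rewrite lerD2l.
rewrite /indist => E.
have hP : PrP m.+1 eps0 E <= Eps * PrQ m.+1 eps0 E + del.
  rewrite PrP_inner PrQ_inner.
  apply: (M (fun c x => ((x, (c.+1 - x)%N) \in E)%:R)) => c x; exact: ind01.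
have hQ : PrQ m.+1 eps0 E <= Eps * PrP m.+1 eps0 E + del.
  rewrite PrP_inner PrQ_inner.
  under eq_bigr do rewrite inner_rev.
  under [X in _ <= _ * X + _]eq_bigr do rewrite inner_rev.
  apply: (M (fun c x => (((c.+1 - x)%N, (c.+1 - (c.+1 - x))%N) \in E)%:R)) => c x; exact: ind01.
rewrite hexp; split; last exact: hP.
rewrite expRN hexp mulrC ler_pdivrMr //.
rewrite mulrC; lra.
Qed.
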